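(* Let $T$ be a tree such that for every high degree vertex $v$ of $T$, at most one connected component of $T-v$ has more than one vertex. Then $T$ has at most two high degree vertices.
   Context: A high degree vertex (HDV) of a tree is a vertex of degree at least $3$. *)

(* Defs.v *)
From mathcomp Require Import all_boot.
Set Implicit Arguments. Unset Strict Implicit. Unset Printing Implicit Defensive.

Section Graphs.
Variables (V : finType) (e : rel V).

Definition simple_graph : Prop := symmetric e /\ irreflexive e.

Definition gconnected : Prop := forall x y : V, connect e x y.

Definition acyclic : Prop :=
  forall c : seq V, uniq c -> 2 < size c -> ~~ cycle e c.

Definition is_tree : Prop := [/\ simple_graph, gconnected & acyclic].

Definition degree (v : V) : nat := #|[set w | e v w]|.

Definition hdv (v : V) : bool := 2 < degree v.

Definition del_rel (v : V) : rel V :=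
  [rel x y | [&& e x y, x != v & y != v]].

(* the connected component of T - v containing u (for u != v) *)
Definition comp_del (v u : V) : {set V} := [set w | connect (del_rel v) u w].

Definition at_most_one_big_comp (v : V) : Prop :=
  forall u1 u2 : V, u1 != v -> u2 != v ->
    1 < #|comp_del v u1| -> 1 < #|comp_del v u2| ->
    comp_del v u1 = comp_del v u2.

End Graphs.

(* Main.v *)
Require Import Defs.
From mathcomp Require Import all_boot.
Set Implicit Arguments. Unset Strict Implicit. Unset Printing Implicit Defensive.

Section T.
Variables (V : finType) (e : rel V).
Hypotheses (Hsym : symmetric e) (Hirr : irreflexive e) (Hacyc : acyclic e).

Lemma path_del m x p : path e x p -> m \notin x :: p -> path (del_rel e m) x p.
Proof.
elim: p x => [|y p IH] x //= /andP[exy pp].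
rewrite !inE !negb_or => /and3P[mx my mp].
rewrite /del_rel /= exy eq_sym mx eq_sym my /=; apply: IH => //.
by rewrite inE negb_or my.
Qed.

Lemma conn_del m x p : path e x p -> m \notin x :: p ->
  connect (del_rel e m) x (last x p).
Proof. by move=> pp mp; apply/connectP; exists p => //; apply: path_del. Qed.

Lemma del_sym m : symmetric (del_rel e m).
Proof. by move=> x y; rewrite /del_rel /= Hsym; case: (x != m); case: (y != m); rewrite ?andbF. Qed.

Lemma path_del_all m x p : path (del_rel e m) x p -> x != m -> all (predC1 m) (x :: p).
Proof.
elim: p x => [|y p IH] x /=; first by move=> _ ->.
by move=> /andP[/and3P[_ _ ym] pp] ->; have /= := IH y pp ym.
Qed.

Lemma sep m u1 u2 : e m u1 -> e m u2 -> u1 != u2 -> ~~ connect (del_rel e m) u1 u2.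
Proof.
move=> e1 e2 n12; apply/negP => /connectP [p pp lp].
case/shortenP: pp lp => p' pp' up' _ lp'.
have u1m : u1 != m by apply/eqP => E; rewrite E Hirr in e1.
have al := path_del_all pp' u1m.
have := Hacyc (c := m :: u1 :: p').
have -> : uniq (m :: u1 :: p').
  rewrite cons_uniq up' andbT; apply/negP => /(allP al) /=; by rewrite eqxx.
have -> : 2 < size (m :: u1 :: p').
  by case: p' {pp' up' al} lp' => [|? ?] //= E; rewrite E eqxx in n12.
rewrite /cycle rcons_cons /= e1 rcons_path -lp' Hsym e2 andbT.
rewrite (sub_path _ pp') //; last by move=> x y /andP[].
by move=> /(_ isT isT).
Qed.

Lemma first_entry (s : seq V) c q : path e c q -> last c q \in s -> c \notin s ->
  exists w m, [/\ w \notin s, m \in s, e w m &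
     connect [rel x y | [&& e x y, x \notin s & y \notin s]] c w].
Proof.
elim: q c => [|y q IH] c /=; first by move=> _ ->.
move=> /andP[ecy pp] ls cs.
case ys: (y \in s); first by exists c, y; split => //; exact: connect0.
have [w [m [ws ms ewm cw]]] := IH y pp ls (negbT ys).
exists w, m; split => //; apply: connect_trans cw; apply: connect1.
by rewrite /= ecy cs ys.
Qed.

Lemma start_nb x p : path e x p -> uniq (x :: p) -> p != [::] ->
  exists z, [/\ z \in p, e x z & connect (del_rel e x) z (last x p)].
Proof.
case: p => [|z p] //= /andP[exz pp] /andP[xn _] _.
by exists z; split => //; [rewrite inE eqxx | apply: conn_del].
Qed.

Lemma end_nb x p : path e x p -> uniq (x :: p) -> p != [::] ->
  exists y, [/\ y \in x :: p, e (last x p) y & connect (del_rel e (last x p)) x y].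
Proof.
case/lastP: p => [|p z] // pp up _.
rewrite rcons_path in pp; case/andP: pp => pp eyz.
rewrite -rcons_cons rcons_uniq in up; case/andP: up => zn _.
exists (last x p); rewrite last_rcons; split.
- by rewrite -rcons_cons mem_rcons inE mem_last orbT.
- by rewrite Hsym.
- exact: conn_del.
Qed.

Lemma mid_nb x p m : path e x p -> uniq (x :: p) -> m \in p -> m != last x p ->
  exists y z, [/\ y != z, y \in x :: p, z \in x :: p, e m y & e m z] /\
     connect (del_rel e m) x y /\ connect (del_rel e m) z (last x p).
Proof.
move=> pp up mp ml; move: pp up ml; case/splitPr: mp => p1 p2.
case: p2 => [|z p2] pp up ml.
  by rewrite last_cat /= eqxx in ml.
rewrite cat_path /= in pp; case/and3P: pp => pp1 eym /andP[emz pp2].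
rewrite -cat_cons cat_uniq in up; case/and3P: up => up1 hs up2.
exists (last x p1), z; split; [split|split].
- apply/eqP => E; move: hs; rewrite /= -E mem_last; by rewrite !orbT.
- by rewrite -cat_cons mem_cat mem_last.
- by rewrite -cat_cons mem_cat !inE eqxx !orbT.
- by rewrite Hsym.
- done.
- apply: conn_del => //; apply/negP => mi; move: hs; by rewrite /= mi.
- rewrite last_cat /=; apply: conn_del => //; move: up2; by rewrite /= => /andP[].
Qed.
End T.

Theorem lemma2p2 (V : finType) (e : rel V) :
  is_tree e ->
  (forall v : V, hdv e v -> at_most_one_big_comp e v) ->
  #|[set v | hdv e v]| <= 2.
Proof.
move=> [[Hsym Hirr] Hconn Hacyc] Hb.
have csym m : connect_sym (del_rel e m) := sym_connect_sym (del_sym Hsym m).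
have nb2 x m : hdv e x -> exists z, e x z && (z != m).
  move=> hx; case: (pickP (fun z => e x z && (z != m))) => [z Hz|H]; first by exists z.
  have sub : [set w | e x w] \subset [set m].
    apply/subsetP => w; rewrite !inE => exw; move: (H w); rewrite exw /=.
    by move/negbFE.
  move: hx; rewrite /hdv /degree => hx.
  have := subset_leq_card sub; rewrite cards1 => h1.
  by have := leq_trans hx h1.
have big m x : hdv e x -> x != m -> 1 < #|comp_del e m x|.
  move=> hx xm; have [z /andP[exz zm]] := nb2 x m hx.
  apply/card_gt1P; exists x, z; split; rewrite ?inE ?connect0 //.
    by apply: connect1; rewrite /del_rel /= exz xm zm.
  by apply/eqP => E; rewrite E Hirr in exz.
have CF m x y : hdv e m -> hdv e x -> hdv e y -> x != m -> y != m ->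
    connect (del_rel e m) x y.
  move=> hm hx hy xm ym.
  have E := Hb m hm x y xm ym (big m x hx xm) (big m y hy ym).
  have : y \in comp_del e m y by rewrite inE connect0.
  by rewrite -E inE.
rewrite leqNgt; apply/negP => /card_gt2P [a [b [c [[ha hb hc] [ab bc ca]]]]].
rewrite inE in ha; rewrite inE in hb; rewrite inE in hc.
have := Hconn a b; case/connectP => P0 pP0 lP0.
case/shortenP: pP0 lP0 => P pP uP _ lP.
have Pn : P != [::] by case: P {pP uP} lP => // /= E; rewrite E eqxx in ab.
have cS : c \notin a :: P.
  apply/negP; rewrite inE => /orP[/eqP E| cP]; first by rewrite E eqxx in ca.
  have cl : c != last a P by rewrite -lP eq_sym.
  have [y [z [[yz _ _ ey ez] [cy cz]]]] := mid_nb Hsym pP uP cP cl.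
  have cab := CF c a b hc ha hb (ltac:(by rewrite eq_sym) : a != c) bc.
  apply: (negP (sep Hsym Hirr Hacyc ey ez yz)).
  rewrite -lP csym in cz.
  apply: connect_trans (connect_trans _ cab) cz.
  by rewrite csym.
have := Hconn c a; case/connectP => Q pQ lQ.
have [w [m [wS mS ewm cw]]] := first_entry (s := a :: P) pQ (ltac:(by rewrite -lQ inE eqxx)) cS.
have cm : c != m by apply/eqP => E; rewrite E mS in cS.
have cwm : connect (del_rel e m) c w.
  apply: connect_sub cw => x y /and3P[exy xs ys]; apply: connect1.
  rewrite /del_rel /= exy /=; apply/andP; split.
    by apply/eqP => E; rewrite E mS in xs.
  by apply/eqP => E; rewrite E mS in ys.
have emw : e m w by rewrite Hsym.
have fin t x : hdv e m -> t \in a :: P -> e m t -> hdv e x -> x != m ->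
    connect (del_rel e m) t x -> False.
  move=> hm tS emt hx xm ctx.
  have xc := CF m x c hm hx hc xm cm.
  have tw : t != w by apply/eqP => E; rewrite -E tS in wS.
  apply: (negP (sep Hsym Hirr Hacyc emt emw tw)).
  apply: connect_trans ctx (connect_trans xc cwm).
have [Ema|nma] := eqVneq m a.
  subst m.
  have [z [zP ez cz]] := start_nb pP uP Pn.
  apply: (fin z b) => //; try by rewrite inE zP orbT.
    by rewrite eq_sym.
  by rewrite lP.
have mP : m \in P by move: mS; rewrite inE (negbTE nma).
have [Emb|nmb] := eqVneq m b.
  subst m.
  have [y [yS ey cy]] := end_nb Hsym pP uP Pn.
  rewrite -lP in ey cy.
  apply: (fin y a) => //; try by rewrite eq_sym.
  by rewrite csym.
have ml : m != last a P by rewrite -lP.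
have [y [z [[yz yS zS ey ez] [cy cz]]]] := mid_nb Hsym pP uP mP ml.
have hm : hdv e m.
  rewrite /hdv /degree; apply/card_gt2P; exists y, z, w; rewrite !inE ey ez emw.
  split => //; split => //.
    by apply/eqP => E; rewrite -E zS in wS.
  by apply/eqP => E; rewrite E yS in wS.
apply: (fin z b) => //; first by rewrite eq_sym.
by rewrite lP.
Qed.
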